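(* Let $P(z)=\sum_{j=0}^{n}a_jz^j$ be a complex polynomial of degree $n\ge 1$ (so $a_n\neq 0$), and let $a,b,c,u,v,w$ be arbitrary positive real numbers. Then every zero $z$ of $P$ satisfies $r_1\le |z|\le r_2$, where $$r_1=\frac{uv+2w}{uvw+w^2}\,\min_{1\le k\le n}\left\{\frac{(uvw+w^2)^n\,u^{\xi(k)}\,(uv)^{\lfloor k/2\rfloor}\,F_k^{(u,v,w)}\binom{n}{k}}{F_{4n}^{(u,v,w)}}\left|\frac{a_0}{a_k}\right|\right\}^{1/k},$$ $$r_2=\frac{abc+c^2}{ab+2c}\,\max_{1\le k\le n}\left\{\frac{F_{4n}^{(a,b,c)}}{(abc+c^2)^n\,a^{\xi(k)}\,(ab)^{\lfloor k/2\rfloor}\,F_k^{(a,b,c)}\binom{n}{k}}\left|\frac{a_{n-k}}{a_n}\right|\right\}^{1/k}.$$ (In the minimum defining $r_1$, indices $k$ with $a_k=0$ are omitted; since $a_n\neq0$ the minimum is over a nonempty set. In particular $r_1=0$ if $a_0=0$.)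
   Context: For positive real numbers $a,b,c$, the generalized Fibonacci numbers $F_m^{(a,b,c)}$ are defined by $F_0^{(a,b,c)}=0$, $F_1^{(a,b,c)}=1$, and for $m\ge 2$: $F_m^{(a,b,c)}=a\,F_{m-1}^{(a,b,c)}+c\,F_{m-2}^{(a,b,c)}$ if $m$ is even, and $F_m^{(a,b,c)}=b\,F_{m-1}^{(a,b,c)}+c\,F_{m-2}^{(a,b,c)}$ if $m$ is odd. For an integer $k$, $\lfloor k/2\rfloor$ denotes the floor of $k/2$ and $\xi(k):=k-2\lfloor k/2\rfloor$ (i.e. $0$ if $k$ is even, $1$ if $k$ is odd). *)

(* Defs.v *)
(* Complex numbers: an arbitrary numClosedFieldType C
   (e.g. algC); positive reals are elements x of C with 0 < x. *)
From HB Require Import structures.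
From mathcomp Require Import all_boot all_order all_algebra.
Set Implicit Arguments. Unset Strict Implicit. Unset Printing Implicit Defensive.
Import Order.TTheory GRing.Theory Num.Theory.
Local Open Scope ring_scope.

Fixpoint gfib {C : numClosedFieldType} (a b c : C) (m : nat) : C :=
  match m with
  | 0 => 0
  | 1 => 1
  | S ((S k) as m1) => (if odd m then b else a) * gfib a b c m1 + c * gfib a b c k
  end.

Definition xi (k : nat) : nat := k - 2 * k./2.

Definition r1_term {C : numClosedFieldType} (p : {poly C}) (n : nat) (u v w : C) (k : nat) : C :=
  k.-root (((u * v * w + w ^+ 2) ^+ n * u ^+ xi k * (u * v) ^+ k./2
             * gfib u v w k * ('C(n, k))%:R / gfib u v w (4 * n))
            * `|p`_0 / p`_k|).

Definition r2_term {C : numClosedFieldType} (p : {poly C}) (n : nat) (a b c : C) (k : nat) : C :=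
  k.-root ((gfib a b c (4 * n) /
             ((a * b * c + c ^+ 2) ^+ n * a ^+ xi k * (a * b) ^+ k./2
              * gfib a b c k * ('C(n, k))%:R))
            * `|p`_(n - k) / p`_n|).

(* r1: min over 1 <= k <= n with a_k <> 0 (nonempty since a_n <> 0; the seed
   value r1_term n is itself one of the terms, so it does not change the min). *)
Definition r1 {C : numClosedFieldType} (p : {poly C}) (n : nat) (u v w : C) : C :=
  (u * v + 2 * w) / (u * v * w + w ^+ 2) *
  foldr Num.min (r1_term p n u v w n)
        [seq r1_term p n u v w k | k <- iota 1 n & p`_k != 0].

(* r2: max over 1 <= k <= n (seed r1_term 1 is one of the terms). *)
Definition r2 {C : numClosedFieldType} (p : {poly C}) (n : nat) (a b c : C) : C :=
  (a * b * c + c ^+ 2) / (a * b + 2 * c) *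
  foldr Num.max (r2_term p n a b c 1)
        [seq r2_term p n a b c k | k <- iota 1 n].

(* Main.v *)
Require Import Defs.
From HB Require Import structures.
From mathcomp Require Import all_boot all_order all_algebra.
From mathcomp Require Import ring.
Set Implicit Arguments. Unset Strict Implicit. Unset Printing Implicit Defensive.
Import Order.TTheory GRing.Theory Num.Theory.
Local Open Scope ring_scope.

Section Fib.
Variables (C : numClosedFieldType) (a b c : C).
Hypotheses (ha : 0 < a) (hb : 0 < b) (hc : 0 < c).

Local Notation F := (gfib a b c).
Definition G k := a ^+ xi k * (a*b) ^+ k./2 * F k.

Lemma gfibSS k : F k.+2 = (if odd k then b else a) * F k.+1 + c * F k.
Proof. by rewrite /= negbK. Qed.

Lemma xiE k : xi k = odd k.
Proof. by rewrite /xi -{1}(odd_double_half k) mul2n addnK. Qed.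

Lemma G_rec k : G k.+2 = a*b*G k.+1 + a*b*c*G k.
Proof.
rewrite /G !xiE gfibSS /= negbK uphalf_half.
case: (odd k) => /=; rewrite ?add0n ?add1n !exprS; ring.
Qed.

Lemma G0 : G 0 = 0. Proof. by rewrite /G /= mulr0. Qed.
Lemma G1 : G 1 = a. Proof. by rewrite /G /= xiE /= expr1 expr0 !mulr1. Qed.

Lemma F_pos k : 0 < F k.+1 /\ 0 <= F k.
Proof.
elim: k => [|k [h1 h0]]; first by rewrite /= ltr01 lexx.
split; last exact: ltW.
rewrite gfibSS; apply: ltr_wpDr; first by apply: mulr_ge0 => //; apply: ltW.
by apply: mulr_gt0 => //; case: (odd k).
Qed.

Lemma G_pos k : 0 < G k.+1.
Proof.
rewrite /G; apply: mulr_gt0; last by case: (F_pos k).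
by apply: mulr_gt0; apply: exprn_gt0 => //; apply: mulr_gt0.
Qed.

Let D := (a*b)^+2 + 4*(a*b*c).
Let d := sqrtC D.
Let al := (a*b + d)/2.
Let be := (a*b - d)/2.

Lemma hd : d ^+ 2 = D. Proof. exact: sqrtCK. Qed.

Lemma two_neq0 : (2:C) != 0. Proof. by rewrite pnatr_eq0. Qed.

Lemma hal : al ^+ 2 = a*b*al + a*b*c.
Proof.
apply/eqP; rewrite -subr_eq0; apply/eqP.
have -> : al ^+ 2 - (a * b * al + a * b * c) = (d^+2 - D)/4.
  rewrite /al /D; field; by rewrite ?two_neq0 ?pnatr_eq0.
by rewrite hd subrr mul0r.
Qed.

Lemma hbe : be ^+ 2 = a*b*be + a*b*c.
Proof.
apply/eqP; rewrite -subr_eq0; apply/eqP.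
have -> : be ^+ 2 - (a * b * be + a * b * c) = (d^+2 - D)/4.
  rewrite /be /D; field; by rewrite ?two_neq0 ?pnatr_eq0.
by rewrite hd subrr mul0r.
Qed.

Lemma d_neq0 : d != 0.
Proof.
rewrite sqrtC_eq0 /D; apply/negP => /eqP h.
have : 0 < (a*b)^+2 + 4*(a*b*c).
  apply: addr_gt0; first by apply: exprn_gt0; apply: mulr_gt0.
  by apply: mulr_gt0; [rewrite ltr0n | apply: mulr_gt0 => //; apply: mulr_gt0].
by rewrite h ltxx.
Qed.

Lemma dab : d = al - be.
Proof. by rewrite /al /be; field. Qed.

Lemma binet_gen (x y : C) k : x ^+ 2 = a*b*x + a*b*c -> y ^+ 2 = a*b*y + a*b*c ->
  (x - y) * G k = a * (x ^+ k - y ^+ k).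
Proof.
move=> hx hy.
have: (x - y) * G k = a * (x ^+ k - y ^+ k) /\ (x - y) * G k.+1 = a * (x ^+ k.+1 - y ^+ k.+1).
  elim: k => [|k [h0 h1]].
    by rewrite G0 G1 !expr0 !expr1 subrr !mulr0 mulrC.
  split => //.
  rewrite G_rec; transitivity (a*b*((x - y)*G k.+1) + a*b*c*((x - y)*G k)); first ring.
  rewrite h1 h0 -[k.+2]addn2 !exprD hx hy [x ^+ k.+1]exprS [y ^+ k.+1]exprS.
  set X := x ^+ k; set Y := y ^+ k; ring.
by case.
Qed.

Lemma binet k : d * G k = a * (al ^+ k - be ^+ k).
Proof. by rewrite dab; apply: binet_gen; [exact: hal | exact: hbe]. Qed.

Lemma fib_identity n :
  \sum_(k < n.+1) ('C(n, k))%:R * (a*b+2*c)^+k * (a*b*c+c^+2)^+(n-k) * G k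
  = F (4 * n).
Proof.
set s := a*b+2*c; set t := a*b*c+c^+2.
have abn0 : a * b != 0 by rewrite mulf_neq0 // gt_eqF.
have E : d * (\sum_(k < n.+1) ('C(n, k))%:R * s^+k * t^+(n-k) * G k)
        = a * ((t + s*al)^+n - (t + s*be)^+n).
  rewrite !exprDn -sumrB mulr_sumr mulr_sumr; apply: eq_bigr => i _.
  rewrite [(s * al) ^+ _]exprMn [(s * be) ^+ _]exprMn.
  have hB := binet i.
  move: hB; move: (G i) (al^+i) (be^+i) ('C(n,i)) (s^+i) (t^+(n-i)) => g A B K S T hB.
  transitivity (K%:R*S*T*(d*g)); first ring.
  rewrite hB; ring.
have Q : forall x : C, x^+2 = a*b*x + a*b*c -> (t + s*x)^+n = x^+(4*n) / (a*b)^+(2*n).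
  move=> x hx.
  have -> : t + s*x = x^+4 / (a*b)^+2.
    apply: (@mulIf _ ((a*b)^+2)); first by rewrite expf_neq0.
    rewrite divfK ?expf_neq0 //.
    have -> : x ^+ 4 = (a*b)^+2 * (x^+2 + 2*c*x + c^+2).
      rewrite (_ : x^+4 = (x^+2)^+2); last by rewrite -exprM.
      rewrite {1}hx; ring.
    rewrite hx /s /t; ring.
  by rewrite expr_div_n -!exprM.
have hF : F (4*n) = G (4*n) / (a*b)^+(2*n).
  have h4 : (4 * n)./2 = 2 * n by rewrite -[4%N]/(2*2)%N -mulnA mul2n doubleK.
  rewrite /G xiE oddM /= h4 expr0 mul1r mulrC mulKf // expf_neq0 //.
apply: (mulfI d_neq0); rewrite E (Q _ hal) (Q _ hbe) hF mulrA binet.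
move: (al ^+ (4*n)) (be ^+ (4*n)) ((a*b)^+(2*n)) => P R X; ring.
Qed.
End Fib.

Lemma foldr_max_ge (R : numDomainType) (x0 : R) s :
  (forall y, y \in x0 :: s -> 0 <= y) -> forall y, y \in x0 :: s -> y <= foldr Num.max x0 s.
Proof.
elim: s => [|z s IH] H y.
  by rewrite mem_seq1 => /eqP ->.
have H' : forall y, y \in x0 :: s -> 0 <= y.
  by move=> y' hy'; apply: H; move: hy'; rewrite !inE => /orP [->|->]; rewrite ?orbT.
have hz : 0 <= z by apply: H; rewrite !inE eqxx orbT.
have hm : 0 <= foldr Num.max x0 s.
  by apply: le_trans (H' x0 (mem_head _ _)) (IH H' x0 (mem_head _ _)).
rewrite /= => hy.
have [hyz|hys] : y = z \/ y \in x0 :: s.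
  by move: hy; rewrite !inE => /or3P [->|/eqP ->|->]; [right|left|right; rewrite orbT].
  rewrite hyz; case: (real_leP (ger0_real hz) (ger0_real hm)) => // h; exact: ltW.
have := IH H' y hys.
case: (real_leP (ger0_real hz) (ger0_real hm)) => // h h'; exact: (le_trans h' (ltW h)).
Qed.

Lemma foldr_min_mem (R : numDomainType) (x0 : R) s : foldr Num.min x0 s \in x0 :: s.
Proof.
elim: s => [|z s IH] /=; first exact: mem_head.
rewrite /Order.min; case: ifP => _; first by rewrite !inE eqxx orbT.
by move: IH; rewrite !inE => /orP [->|->]; rewrite ?orbT.
Qed.

Lemma foldr_min_le (R : numDomainType) (x0 : R) s :
  (forall y, y \in x0 :: s -> 0 <= y) -> forall y, y \in x0 :: s -> foldr Num.min x0 s <= y.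
Proof.
elim: s => [|z s IH] H y.
  by rewrite mem_seq1 => /eqP ->.
have H' : forall y, y \in x0 :: s -> 0 <= y.
  by move=> y' hy'; apply: H; move: hy'; rewrite !inE => /orP [->|->]; rewrite ?orbT.
have hz : 0 <= z by apply: H; rewrite !inE eqxx orbT.
have hm : 0 <= foldr Num.min x0 s by apply: H'; exact: foldr_min_mem.
rewrite /= => hy.
have [hyz|hys] : y = z \/ y \in x0 :: s.
  by move: hy; rewrite !inE => /or3P [->|/eqP ->|->]; [right|left|right; rewrite orbT].
  rewrite hyz; case: (real_leP (ger0_real hz) (ger0_real hm)) => // h; exact: ltW.
have := IH H' y hys.
case: (real_leP (ger0_real hz) (ger0_real hm)) => // h h'; exact: (le_trans h h').
Qed.

Lemma pow_q (R: numDomainType) (q X : R) k : 0 <= q -> q <= 1 -> 0 <= X -> (0 < k)%N ->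
  (q*X)^+k <= q * X^+k.
Proof.
move=> q0 q1 X0; case: k => // k _.
rewrite exprMn; apply: ler_wpM2r; first exact: exprn_ge0.
rewrite exprS -[X in _ <= X]mulr1; apply: ler_wpM2l => //; exact: exprn_ile1.
Qed.

Lemma step_up (R : numFieldType) (A P Pk W Fn q s t : R) k n :
 (0 < k)%N -> (k <= n)%N -> 0 < A -> 0 < P -> 0 < W -> 0 < Fn ->
 0 <= q -> q <= 1 -> 0 < s -> 0 < t ->
 Fn / W * (Pk / P) <= (q * (A * s / t))^+k ->
 Pk * A^+(n-k) <= q * (P * A^+n / Fn) * (s^+k * t^+(n-k) * (W / t^+n)).
Proof.
move=> k0 kn A0 P0 W0 F0 q0 q1 s0 t0 h.
have h2 := le_trans h (pow_q q0 q1 (ltW (divr_gt0 (mulr_gt0 A0 s0) t0)) k0).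
have WPF : 0 < W * P / Fn by apply: divr_gt0 => //; apply: mulr_gt0.
rewrite -(ler_pM2r WPF) in h2.
rewrite (_ : Fn / W * (Pk / P) * (W * P / Fn) = Pk) in h2; last first.
  by field; rewrite ?gt_eqF.
have h3 := ler_wpM2r (exprn_ge0 (n-k) (ltW A0)) h2.
apply: (le_trans h3); rewrite le_eqVlt; apply/orP; left; apply/eqP.
have eA : A^+n = A^+(n-k)*A^+k by rewrite -exprD subnK.
have et : t^+n = t^+(n-k)*t^+k by rewrite -exprD subnK.
rewrite eA et !exprMn exprVn.
have tk : t^+k != 0 by rewrite expf_neq0 // gt_eqF.
have tnk : t^+(n-k) != 0 by rewrite expf_neq0 // gt_eqF.
have Fn0 : Fn != 0 by rewrite gt_eqF.
move: tk tnk Fn0 (A^+k) (A^+(n-k)) (s^+k) => tk tnk Fn0 Ak Ank sk.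
move: tk tnk; move: (t^+k) (t^+(n-k)) => T1 T2 tk tnk.
by field; rewrite tk tnk Fn0.
Qed.

Lemma step_low (R : numFieldType) (A P0 Pk Tk m q s t : R) k :
 (0 < k)%N -> 0 < m -> 0 < Pk -> 0 < s -> 0 < t -> 0 <= q -> q <= 1 ->
 A = q * (s / t * m) ->
 m ^+ k <= Tk * (P0 / Pk) ->
 Pk * A ^+ k <= q * P0 * (Tk * (s / t) ^+ k).
Proof.
move=> k0 m0 Pk0 s0 t0 q0 q1 -> h.
have st0 : 0 <= s / t * m by apply: ltW; apply: mulr_gt0 => //; apply: divr_gt0.
have h1 := pow_q q0 q1 st0 k0.
have Pk0' : 0 <= Pk by exact: ltW.
apply: (le_trans (ler_wpM2l Pk0' h1)).
rewrite exprMn.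
have h2 : Pk * m ^+ k <= Tk * P0.
  have iP : 0 < Pk^-1 by rewrite invr_gt0.
  rewrite -(ler_pM2l iP) mulKf ?gt_eqF //.
  by rewrite (_ : Pk^-1 * (Tk * P0) = Tk * (P0 / Pk)) //; ring.
have st1 : 0 <= s / t by apply: ltW; apply: divr_gt0.
have h3 := ler_wpM2l (mulr_ge0 q0 (exprn_ge0 k st1)) h2.
apply: (le_trans _ (le_trans h3 _)); rewrite le_eqVlt; apply/orP; left; apply/eqP; ring.
Qed.

Lemma root_le (C : numClosedFieldType) k (y M : C) :
  (0 < k)%N -> 0 <= y -> 0 <= M -> k.-root y <= M -> y <= M ^+ k.
Proof.
move=> k0 y0 M0 h; rewrite -{1}[y](rootCK k0).
by apply: lerXn2r => //; rewrite nnegrE ?rootC_ge0.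
Qed.

Lemma le_root (C : numClosedFieldType) k (y m : C) :
  (0 < k)%N -> 0 <= y -> 0 <= m -> m <= k.-root y -> m ^+ k <= y.
Proof.
move=> k0 y0 m0 h; rewrite -[y in _ <= y](rootCK k0).
by apply: lerXn2r => //; rewrite nnegrE ?rootC_ge0.
Qed.

Lemma root_ge0 (C : numClosedFieldType) k (y : C) : 0 <= y -> 0 <= k.-root y.
Proof. by case: k => [|k] y0; [rewrite root0C | rewrite rootC_ge0]. Qed.

Lemma sum_rev (R : nmodType) (f : nat -> R) n :
  \sum_(k < n.+1) f k = \sum_(i < n) f (n - i)%N + f 0%N.
Proof.
rewrite -(big_mkord xpredT f) big_rev_mkord subn0 big_ord_recr /= subnn.
by congr (_ + _); apply: eq_bigr => i _; rewrite subSS.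
Qed.

Lemma G_ge0 (C : numClosedFieldType) (a b c : C) k : 0 < a -> 0 < b -> 0 < c -> 0 <= G a b c k.
Proof. by move=> ha hb hc; case: k => [|k]; [rewrite G0 | apply: ltW; apply: G_pos]. Qed.

Lemma F_ge0 (C : numClosedFieldType) (a b c : C) k : 0 < a -> 0 < b -> 0 < c -> 0 <= gfib a b c k.
Proof. by move=> ha hb hc; case: (F_pos ha hb hc k). Qed.

Lemma F4n_gt0 (C : numClosedFieldType) (a b c : C) n : 0 < a -> 0 < b -> 0 < c -> (1 <= n)%N ->
  0 < gfib a b c (4 * n).
Proof.
move=> ha hb hc n1; have := (F_pos ha hb hc (4 * n).-1).1.
by rewrite prednK // muln_gt0.
Qed.

Lemma upper (C : numClosedFieldType) (p : {poly C}) n (a b c z : C) :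
  (1 <= n)%N -> size p = n.+1 -> 0 < a -> 0 < b -> 0 < c -> root p z ->
  `|z| <= r2 p n a b c.
Proof.
move=> n1 sz ha hb hc rz.
have pn0 : p`_n != 0.
  have : p != 0 by rewrite -size_poly_gt0 sz.
  by rewrite -lead_coef_eq0 lead_coefE sz.
have hz : \sum_(i < n.+1) p`_i * z ^+ i = 0.
  by rewrite -sz -horner_coef; apply/eqP; rewrite -rootE.
set s := a*b+2*c; set t := a*b*c + c^+2.
have s0 : 0 < s by apply: addr_gt0; [apply: mulr_gt0 | apply: mulr_gt0; rewrite ?ltr0n].
have t0 : 0 < t by apply: addr_gt0; [apply: mulr_gt0 => //; apply: mulr_gt0 | apply: exprn_gt0].
set Fn := gfib a b c (4 * n).
have Fn0 : 0 < Fn by apply: F4n_gt0.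
set W := fun k => t ^+ n * G a b c k * ('C(n, k))%:R.
have termE : forall k, r2_term p n a b c k = k.-root (Fn / W k * (`|p`_(n - k)| / `|p`_n|)).
  by move=> k; rewrite /r2_term /W /G /t /Fn normf_div; congr (_.-root (_ / _ * _)); rewrite !mulrA.
have W0 : forall k, (0 < k)%N -> (k <= n)%N -> 0 < W k.
  move=> k k0 kn; rewrite /W; apply: mulr_gt0; first apply: mulr_gt0.
  - exact: exprn_gt0.
  - by case: k k0 kn => // k _ _; apply: G_pos.
  by rewrite ltr0n bin_gt0.
have tnn : forall k, 0 <= r2_term p n a b c k.
  move=> k; rewrite /r2_term; apply: root_ge0; apply: mulr_ge0; last exact: normr_ge0.
  apply: divr_ge0; first exact: ltW.
  apply: mulr_ge0; last exact: ler0n.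
  apply: mulr_ge0; last exact: F_ge0.
  apply: mulr_ge0; [apply: mulr_ge0 |]; apply: exprn_ge0; [exact: (ltW t0) | exact: ltW | apply: mulr_ge0; exact: ltW].
rewrite /r2 -/s -/t.
set M := foldr _ _ _.
have allnn : forall y, y \in r2_term p n a b c 1 :: [seq r2_term p n a b c k | k <- iota 1 n] -> 0 <= y.
  by move=> y; rewrite inE => /orP [/eqP -> | /mapP [k _ ->]]; apply: tnn.
have Mge : forall k, (0 < k)%N -> (k <= n)%N -> r2_term p n a b c k <= M.
  move=> k k0 kn; apply: foldr_max_ge => //.
  by rewrite inE; apply/orP; right; apply: map_f; rewrite mem_iota k0 add1n ltnS.
have M0 : 0 <= M by apply: le_trans (allnn _ (mem_head _ _)) (foldr_max_ge allnn (mem_head _ _)).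
have tsM0 : 0 <= t / s * M by apply: mulr_ge0 => //; apply: ltW; apply: divr_gt0.
rewrite real_leNgt ?ger0_real //; apply/negP => hlt.
set A := `|z| in hlt *.
have A0 : 0 < A by apply: le_lt_trans hlt.
set q := t / s * M / A.
have q0 : 0 <= q by apply: divr_ge0 => //; exact: ltW.
have q1 : q < 1 by rewrite /q ltr_pdivrMr // mul1r.
have key : forall k, (0 < k)%N -> (k <= n)%N ->
   `|p`_(n - k)| * A ^+ (n - k) <=
   q * (`|p`_n| * A ^+ n / Fn) * (('C(n, k))%:R * s ^+ k * t ^+ (n - k) * G a b c k).
  move=> k k0 kn.
  have := @step_up _ A `|p`_n| `|p`_(n - k)| (W k) Fn q s t k n k0 kn A0.
  rewrite normr_gt0 pn0 => /(_ isT (W0 k k0 kn) Fn0 q0 (ltW q1) s0 t0) H.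
  have E : s ^+ k * t ^+ (n - k) * (W k / t ^+ n) =
           'C(n, k)%:R * s ^+ k * t ^+ (n - k) * G a b c k.
    rewrite /W; have tn : t ^+ n != 0 by rewrite expf_neq0 // gt_eqF.
    move: tn; move: (t ^+ n) => T tn; field; exact: tn.
  rewrite -E; apply: H.
  have -> : q * (A * s / t) = M.
    rewrite /q; field; rewrite ?gt_eqF //.
  apply: root_le => //; last by rewrite -termE; apply: Mge.
  apply: mulr_ge0; [apply: divr_ge0; apply: ltW; [exact: Fn0 | exact: W0] | apply: divr_ge0; exact: normr_ge0].
pose g := fun k : nat => ('C(n, k))%:R * s ^+ k * t ^+ (n - k) * G a b c k.
have hn : p`_n * z ^+ n = - \sum_(i < n) p`_i * z ^+ i.
  by move: hz; rewrite big_ord_recr /= => /eqP; rewrite addrC addr_eq0 => /eqP.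
have h1 : `|p`_n| * A ^+ n <= \sum_(i < n) `|p`_i| * A ^+ i.
  rewrite /A -normrX -normrM hn normrN; apply: le_trans; first exact: ler_norm_sum.
  by apply: ler_sum => i _; rewrite normrM normrX.
have h2 : \sum_(i < n) `|p`_i| * A ^+ i <= \sum_(i < n) q * (`|p`_n| * A ^+ n / Fn) * g (n - i)%N.
  apply: ler_sum => i _; have hi := ltn_ord i.
  by rewrite /g; have := key (n - i)%N; rewrite subn_gt0 leq_subr subKn ?(ltnW hi) // => /(_ hi isT).
have h3 : \sum_(i < n) q * (`|p`_n| * A ^+ n / Fn) * g (n - i)%N = q * (`|p`_n| * A ^+ n).
  rewrite -mulr_sumr.
  have : \sum_(k < n.+1) g k = Fn by apply: fib_identity.
  rewrite sum_rev {2}/g G0 mulr0 addr0 => ->.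
  by rewrite mulrA divfK // gt_eqF.
have X0 : 0 < `|p`_n| * A ^+ n by apply: mulr_gt0; [rewrite normr_gt0 | apply: exprn_gt0].
have := le_trans h1 h2; rewrite h3.
move=> h; have hq : q * (`|p`_n| * A ^+ n) < `|p`_n| * A ^+ n by rewrite gtr_pMl.
by have := lt_le_trans hq h; rewrite ltxx.
Qed.

Lemma lower (C : numClosedFieldType) (p : {poly C}) n (u v w z : C) :
  (1 <= n)%N -> size p = n.+1 -> 0 < u -> 0 < v -> 0 < w -> root p z ->
  r1 p n u v w <= `|z|.
Proof.
move=> n1 sz hu hv hw rz.
have pn0 : p`_n != 0.
  have : p != 0 by rewrite -size_poly_gt0 sz.
  by rewrite -lead_coef_eq0 lead_coefE sz.
have hz : \sum_(i < n.+1) p`_i * z ^+ i = 0.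
  by rewrite -sz -horner_coef; apply/eqP; rewrite -rootE.
set s := u*v+2*w; set t := u*v*w + w^+2.
have s0 : 0 < s by apply: addr_gt0; [apply: mulr_gt0 | apply: mulr_gt0; rewrite ?ltr0n].
have t0 : 0 < t by apply: addr_gt0; [apply: mulr_gt0 => //; apply: mulr_gt0 | apply: exprn_gt0].
set Fn := gfib u v w (4 * n).
have Fn0 : 0 < Fn by apply: F4n_gt0.
set T := fun k => t ^+ n * G u v w k * ('C(n, k))%:R / Fn.
have termE : forall k, r1_term p n u v w k = k.-root (T k * (`|p`_0| / `|p`_k|)).
  by move=> k; rewrite /r1_term /T /G /t /Fn normf_div; congr (_.-root (_ / _ * _)); rewrite !mulrA.
have T0 : forall k, (0 < k)%N -> (k <= n)%N -> 0 < T k.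
  move=> k k0 kn; rewrite /T; apply: divr_gt0 => //; apply: mulr_gt0; first apply: mulr_gt0.
  - exact: exprn_gt0.
  - by case: k k0 kn => // k _ _; apply: G_pos.
  by rewrite ltr0n bin_gt0.
have tnn : forall k, 0 <= r1_term p n u v w k.
  move=> k; rewrite /r1_term; apply: root_ge0; apply: mulr_ge0; last exact: normr_ge0.
  apply: divr_ge0; last exact: ltW.
  apply: mulr_ge0; last exact: ler0n.
  apply: mulr_ge0; last exact: F_ge0.
  apply: mulr_ge0; [apply: mulr_ge0 |]; apply: exprn_ge0; [exact: (ltW t0) | exact: ltW | apply: mulr_ge0; exact: ltW].
rewrite /r1 -/s -/t.
set L := [seq _ | _ <- _].
set m := foldr _ _ _.
have allnn : forall y, y \in r1_term p n u v w n :: L -> 0 <= y.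
  by move=> y; rewrite inE => /orP [/eqP -> | /mapP [k _ ->]]; apply: tnn.
have mle : forall k, (0 < k)%N -> (k <= n)%N -> p`_k != 0 -> m <= r1_term p n u v w k.
  move=> k k0 kn pk; apply: foldr_min_le => //.
  rewrite inE; apply/orP; right; apply: map_f.
  by rewrite mem_filter pk mem_iota k0 add1n ltnS.
have stpos : 0 < s / t by apply: divr_gt0.
case: (eqVneq p`_0 0) => p00.
  have : m <= 0.
    have := foldr_min_le allnn (mem_head _ _); rewrite -/m.
    by rewrite termE p00 normr0 mul0r mulr0 rootC0.
  move=> m0; apply: le_trans (normr_ge0 z).
  by rewrite pmulr_rle0.
have mpos : 0 < m.
  have : m \in r1_term p n u v w n :: L by apply: foldr_min_mem.
  have hpos : forall k, (0 < k)%N -> (k <= n)%N -> p`_k != 0 -> 0 < r1_term p n u v w k.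
    move=> k k0 kn pk; rewrite termE rootC_gt0 //; apply: mulr_gt0; first exact: T0.
    by apply: divr_gt0; rewrite normr_gt0.
  rewrite inE => /orP [/eqP -> | /mapP [k]]; first by apply: hpos.
  rewrite mem_filter mem_iota add1n ltnS => /andP [pk /andP [k0 kn]] ->.
  exact: hpos.
have sm0 : 0 < s / t * m by apply: mulr_gt0.
rewrite real_leNgt ?ger0_real //; last exact: ltW.
apply/negP => hlt.
set A := `|z| in hlt *.
set q := A / (s / t * m).
have q0 : 0 <= q by apply: divr_ge0; [exact: normr_ge0 | exact: ltW].
have q1 : q < 1 by rewrite /q ltr_pdivrMr // mul1r.
pose g := fun k : nat => ('C(n, k))%:R * s ^+ k * t ^+ (n - k) * G u v w k.
have key : forall k, (0 < k)%N -> (k <= n)%N ->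
   `|p`_k| * A ^+ k <= q * `|p`_0| * (g k / Fn).
  move=> k k0 kn.
  have E : T k * (s / t) ^+ k = g k / Fn.
    rewrite /T /g; have et : t^+n = t^+(n-k)*t^+k by rewrite -exprD subnK.
    rewrite et expr_div_n.
    have tk : t^+k != 0 by rewrite expf_neq0 // gt_eqF.
    have tnk : t^+(n-k) != 0 by rewrite expf_neq0 // gt_eqF.
    have F0 : Fn != 0 by rewrite gt_eqF.
    move: tk tnk; move: (t^+k) (t^+(n-k)) => T1 T2 tk tnk.
    by field; rewrite tk F0.
  case: (eqVneq p`_k 0) => pk.
    rewrite pk normr0 mul0r; apply: mulr_ge0; first by apply: mulr_ge0 => //.
    by rewrite -E; apply: mulr_ge0; [exact: ltW (T0 k k0 kn) | apply: exprn_ge0; exact: ltW].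
  rewrite -E; apply: (@step_low _ A `|p`_0| `|p`_k| (T k) m q s t k) => //.
  - by rewrite normr_gt0.
  - exact: ltW.
  - by rewrite /q divfK // gt_eqF.
  apply: le_root => //; first by apply: mulr_ge0; [exact: ltW (T0 k k0 kn) | apply: divr_ge0].
  - exact: ltW.
  by rewrite -termE; apply: mle.
have hn : p`_0 = - \sum_(i < n) p`_i.+1 * z ^+ i.+1.
  move: hz; rewrite big_ord_recl expr0 mulr1 => /eqP; rewrite addr_eq0 => /eqP ->.
  by congr (- _); apply: eq_bigr => i _; rewrite lift0.
have h1 : `|p`_0| <= \sum_(i < n) `|p`_i.+1| * A ^+ i.+1.
  rewrite {1}hn normrN; apply: le_trans; first exact: ler_norm_sum.
  by apply: ler_sum => i _; rewrite normrM normrX.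
have h2 : \sum_(i < n) `|p`_i.+1| * A ^+ i.+1 <= \sum_(i < n) q * `|p`_0| * (g i.+1 / Fn).
  by apply: ler_sum => i _; apply: key => //; exact: ltn_ord.
have h3 : \sum_(i < n) q * `|p`_0| * (g i.+1 / Fn) = q * `|p`_0|.
  rewrite -mulr_sumr -mulr_suml.
  have : \sum_(k < n.+1) g k = Fn by apply: fib_identity.
  rewrite big_ord_recl {1}/g G0 mulr0 add0r.
  under eq_bigr do rewrite lift0.
  by move=> ->; rewrite divff ?mulr1 // gt_eqF.
have X0 : 0 < `|p`_0| by rewrite normr_gt0.
have := le_trans h1 h2; rewrite h3.
move=> h; have hq : q * `|p`_0| < `|p`_0| by rewrite gtr_pMl.
by have := lt_le_trans hq h; rewrite ltxx.
Qed.

Unset Implicit Arguments.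
Set Strict Implicit.

Theorem theorem1 (C : numClosedFieldType) (p : {poly C}) (n : nat)
  (a b c u v w : C) :
  (1 <= n)%N -> size p = n.+1 ->
  0 < a -> 0 < b -> 0 < c -> 0 < u -> 0 < v -> 0 < w ->
  forall z : C, root p z ->
    r1 p n u v w <= `|z| <= r2 p n a b c.
Proof.
move=> n1 sz ha hb hc hu hv hw z rz.
by apply/andP; split; [apply: lower | apply: upper].
Qed.
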